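(* Let $K=\mathbb{Q}[\sqrt{d}]$ with $d>1$ a square-free integer, let $\mathfrak{o}_K$ be its ring of integers, let $\epsilon>1$ be the fundamental unit of $\mathfrak{o}_K$, and let $C_2=\langle g\rangle$. Let $n$ be the order of $\epsilon$ modulo $2\mathfrak{o}_K$ (i.e. the least $n\ge 1$ with $\epsilon^n\in 1+2\mathfrak{o}_K$). Then $$\mathcal{U}_1(\mathfrak{o}_K[C_2])=\langle g\rangle\times\left\langle \tfrac{1+\epsilon^n}{2}+\tfrac{1-\epsilon^n}{2}g\right\rangle\cong C_2\times\mathbb{Z}.$$
   Context: The fundamental unit $\epsilon$ is the unique unit $\epsilon>1$ of $\mathfrak{o}_K$ with $\mathcal{U}(\mathfrak{o}_K)=\pm\langle\epsilon\rangle$. $\mathcal{U}_1(\mathfrak{o}_K[C_2])$ is the group of units of augmentation $1$ in the group ring $\mathfrak{o}_K[C_2]$. *)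

(* Defs.v *)
From HB Require Import structures.
From mathcomp Require Import all_boot all_order all_algebra all_field.
From mathcomp Require Import ring.
Set Implicit Arguments. Unset Strict Implicit. Unset Printing Implicit Defensive.
Import Order.TTheory GRing.Theory Num.Theory.
Local Open Scope ring_scope.

(* The group ring algC[C_2], C_2 = <g>: the element (a, b) stands for a + b g. *)
Definition grC : Type := (algC * algC)%type.
HB.instance Definition _ := GRing.Zmodule.on grC.

Definition gr_mul (x y : grC) : grC :=
  (x.1 * y.1 + x.2 * y.2, x.1 * y.2 + x.2 * y.1).
Definition gr_one : grC := (1, 0).

Lemma gr_mulA : associative gr_mul.
Proof. by move=> [a b] [c d] [e f]; rewrite /gr_mul /=; congr (_, _); ring. Qed.
Lemma gr_mulC : commutative gr_mul.
Proof. by move=> [a b] [c d]; rewrite /gr_mul /=; congr (_, _); ring. Qed.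
Lemma gr_mul1 : left_id gr_one gr_mul.
Proof. by move=> [a b]; rewrite /gr_mul /gr_one /=; congr (_, _); ring. Qed.
Lemma gr_mulDl : left_distributive gr_mul +%R.
Proof. by move=> [a b] [c d] [e f]; rewrite /gr_mul /= /add_pair /=; congr (_, _) => /=; ring. Qed.
Lemma gr_one_neq0 : gr_one != 0.
Proof. by apply/eqP => -[] /eqP; rewrite oner_eq0. Qed.

HB.instance Definition _ :=
  GRing.Zmodule_isComNzRing.Build grC gr_mulA gr_mulC gr_mul1 gr_mulDl gr_one_neq0.

Definition gr_unit : {pred grC} := fun x => x.1 ^+ 2 - x.2 ^+ 2 != 0.
Definition gr_inv (x : grC) : grC :=
  if x \in gr_unit then (x.1 / (x.1 ^+ 2 - x.2 ^+ 2), - x.2 / (x.1 ^+ 2 - x.2 ^+ 2))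
  else x.

Lemma gr_mulVx : {in gr_unit, left_inverse 1 gr_inv *%R}.
Proof.
move=> [a b] Hu; rewrite /gr_inv Hu.
rewrite [_ * _]/(gr_mul _ _) /=; congr (_, _); by field.
Qed.

Lemma gr_unitPl (x y : grC) : y * x = 1 -> x \in gr_unit.
Proof.
case: x y => [a b] [c d] /= [] E1 E2.
rewrite /gr_unit /in_mem /=; apply/eqP => H.
have : (c ^+ 2 - d ^+ 2) * (a ^+ 2 - b ^+ 2) = 1.
  have -> : (c ^+ 2 - d ^+ 2) * (a ^+ 2 - b ^+ 2) =
     (c * a + d * b) ^+ 2 - (c * b + d * a) ^+ 2 by ring.
  by rewrite E1 E2; ring.
by rewrite H mulr0 => /eqP; rewrite eq_sym oner_eq0.
Qed.

Lemma gr_invr_out : {in [predC gr_unit], gr_inv =1 id}.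
Proof. by move=> x; rewrite inE /gr_inv => /negbTE ->. Qed.

HB.instance Definition _ :=
  GRing.ComNzRing_hasMulInverse.Build grC gr_mulVx gr_unitPl gr_invr_out.

Definition gC2 : grC := (0, 1).
Definition aug (x : grC) : algC := x.1 + x.2.

Definition inK (d : nat) (x : algC) : Prop :=
  exists a b : rat, x = ratr a + ratr b * sqrtC d%:R.
Definition inOK (d : nat) (x : algC) : Prop := inK d x /\ x \in Aint.
Definition unitOK (d : nat) (x : algC) : Prop :=
  inOK d x /\ exists y, inOK d y /\ x * y = 1.

Definition squarefree (n : nat) : Prop := forall m : nat, (1 < m)%N -> ~~ (m * m %| n)%N.

Definition in_grOK (d : nat) (x : grC) : Prop := inOK d x.1 /\ inOK d x.2.
Definition U1 (d : nat) (x : grC) : Prop :=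
  [/\ in_grOK d x, aug x = 1 & exists y, in_grOK d y /\ x * y = 1].

Definition uC2 (eps : algC) (n : nat) : grC := ((1 + eps ^+ n) / 2, (1 - eps ^+ n) / 2).

(* Main.v *)
Require Import Defs.
From HB Require Import structures.
From mathcomp Require Import all_boot all_order all_algebra all_field.
From mathcomp Require Import ring.
Import Order.TTheory GRing.Theory Num.Theory.
Local Open Scope ring_scope.
Set Implicit Arguments. Unset Strict Implicit.

Definition P (w : algC) : grC := ((1 + w) / 2, (1 - w) / 2).

Lemma two_neq0 : (2 : algC) != 0. Proof. by rewrite pnatr_eq0. Qed.

Lemma grmulE (a b c e : algC) : ((a, b) : grC) * (c, e) = (a * c + b * e, a * e + b * c).
Proof. by []. Qed.

Lemma PM w w' : P w * P w' = P (w * w').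
Proof. rewrite /P grmulE; have := two_neq0 => h; congr (_, _); by field. Qed.

Lemma P1 : P 1 = 1.
Proof. have := two_neq0 => h; rewrite /P; apply: (@pair_equal_spec _ _ _ _ _ _).2; split; simpl.
  by rewrite divff. by rewrite subrr mul0r. Qed.

Lemma gC2E : gC2 = P (-1).
Proof. have := two_neq0 => h; rewrite /P /gC2; congr (_, _).
  by rewrite subrr mul0r. by rewrite opprK divff. Qed.

Lemma PX w m : P w ^+ m = P (w ^+ m).
Proof. elim: m => [|m IH]; first by rewrite !expr0 P1.
by rewrite !exprS IH PM. Qed.

Lemma PV w : w != 0 -> (P w)^-1 = P w^-1.
Proof. move=> hw.
have hu : P w * P w^-1 = 1 by rewrite PM divff // P1.
have u : P w \is a GRing.unit by apply/unitrPr; exists (P w^-1).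
by rewrite -[RHS]mul1r -(mulVr u) -mulrA hu mulr1. Qed.

Lemma Pz w (k : int) : w != 0 -> P w ^ k = P (w ^ k).
Proof. move=> hw; case: k => m.
  by rewrite -!exprnP PX.
change ((P w ^+ m.+1)^-1 = P ((w ^+ m.+1)^-1)).
by rewrite PX PV // expf_neq0. Qed.

Lemma Pinj w w' : P w = P w' -> w = w'.
Proof. rewrite /P => -[] h1 h2.
have : (1 + w) / 2 - (1 - w) / 2 = (1 + w') / 2 - (1 - w') / 2 by rewrite h1 h2.
have := two_neq0 => h.
have e : forall x : algC, (1 + x) / 2 - (1 - x) / 2 = x by move=> x; field.
by rewrite !e. Qed.

Section OK.
Variable d : nat.
Let s := sqrtC (d%:R : algC).
Lemma ss : s * s = d%:R. Proof. by rewrite -expr2 sqrtCK. Qed.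

Lemma OKD x y : inOK d x -> inOK d y -> inOK d (x + y).
Proof. move=> [[a [b ->]] hx] [[c [e ->]] hy]; split; last exact: rpredD.
by exists (a + c), (b + e); rewrite !rmorphD /=; ring. Qed.

Lemma OKN x : inOK d x -> inOK d (- x).
Proof. move=> [[a [b ->]] hx]; split; last by rewrite rpredN.
by exists (- a), (- b); rewrite !rmorphN /=; ring. Qed.

Lemma OKM x y : inOK d x -> inOK d y -> inOK d (x * y).
Proof. move=> [[a [b ->]] hx] [[c [e ->]] hy]; split; last exact: rpredM.
exists (a * c + b * e * d%:R), (a * e + b * c).
have hs := ss; rewrite /s in hs; set t := sqrtC _ in hs *.
rewrite !rmorphD !rmorphM /= ratr_nat -hs; ring. Qed.

Lemma OK1 : inOK d 1.
Proof. split; last exact: rpred1. by exists 1, 0; rewrite rmorph1 rmorph0; ring. Qed.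

Lemma OKB x y : inOK d x -> inOK d y -> inOK d (x - y).
Proof. by move=> hx hy; apply: OKD => //; apply: OKN. Qed.

Lemma OKX x m : inOK d x -> inOK d (x ^+ m).
Proof. move=> hx; elim: m => [|m IH]; first by rewrite expr0; apply: OK1.
by rewrite exprS; apply: OKM. Qed.
End OK.

Definition G d (x : algC) := inOK d ((x - 1) / 2).

Lemma G_OK d x : G d x -> inOK d x.
Proof. move=> h.
have -> : x = (x - 1) / 2 + (x - 1) / 2 + 1 by have := two_neq0; move=> ?; field.
by apply: OKD; [apply: OKD|apply: OK1]. Qed.

Lemma G1 d x y : G d x -> G d y -> G d (x * y).
Proof. move=> hx hy; rewrite /G.
have -> : (x * y - 1) / 2 = x * ((y - 1) / 2) + (x - 1) / 2 by field.
by apply: OKD => //; apply: OKM => //; apply: G_OK. Qed.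

Lemma G2 d x y : G d x -> inOK d y -> x * y = 1 -> G d y.
Proof. move=> hx hy e; rewrite /G.
have -> : (y - 1) / 2 = - (y * ((x - 1) / 2)).
  by rewrite mulrA mulrBr mulr1 [y * x]mulrC e; field.
by apply: OKN; apply: OKM. Qed.

Lemma G3 d x : G d (- x) -> G d x.
Proof. move=> h; rewrite /G.
have -> : (x - 1) / 2 = - ((- x - 1) / 2) - 1 by field.
by apply: OKB; [apply: OKN|apply: OK1]. Qed.

Lemma G3' d x : G d x -> G d (- x).
Proof. by move=> h; apply: G3; rewrite opprK. Qed.

Lemma Gone d : G d 1.
Proof. rewrite /G subrr mul0r. have := @OKB d 1 1 (@OK1 d) (@OK1 d). by rewrite subrr. Qed.

Lemma G5 d x z y : G d x -> G d z -> x * z = 1 -> G d (x * y) -> G d y.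
Proof. move=> hx hz e hxy.
have -> : y = z * (x * y) by rewrite mulrA [z * x]mulrC e mul1r.
exact: G1. Qed.

Lemma GP d w : G d w -> in_grOK d (P w).
Proof. move=> h; split => /=.
  have -> : (1 + w) / 2 = (w - 1) / 2 + 1 by field.
  by apply: OKD => //; apply: OK1.
have -> : (1 - w) / 2 = - ((w - 1) / 2) by field.
exact: OKN. Qed.

Lemma GX d x m : G d x -> G d (x ^+ m).
Proof. move=> h; elim: m => [|m IH]; first by rewrite expr0; apply: Gone.
by rewrite exprS; apply: G1. Qed.

Lemma GZ d E (q : int) : G d E -> G d E^-1 -> G d (E ^ q).
Proof. move=> h hi; case: q => m; first by rewrite -exprnP; apply: GX.
change (G d ((E ^+ m.+1)^-1)); rewrite -exprVn; exact: GX. Qed.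

Unset Implicit Arguments.
Theorem mainTheorem5 (d : nat) (eps : algC) (n : nat) :
  (1 < d)%N -> squarefree d ->
  unitOK d eps -> 1 < eps ->
  (forall x, unitOK d x -> exists (s : bool) (k : int), x = (-1) ^+ s * eps ^ k) ->
  (0 < n)%N -> inOK d ((eps ^+ n - 1) / 2) ->
  (forall m : nat, (0 < m < n)%N -> ~ inOK d ((eps ^+ m - 1) / 2)) ->
  (forall x : grC, U1 d x <-> exists (i : bool) (k : int), x = gC2 ^+ i * uC2 eps n ^ k) /\
  (forall (i j : bool) (k l : int),
      gC2 ^+ i * uC2 eps n ^ k = gC2 ^+ j * uC2 eps n ^ l -> i = j /\ k = l).
Proof.
move=> hd hsf [hOKe [e' [hOKe' he']]] he1 hU hn hGE hmin.
have e0 : eps != 0 by rewrite gt_eqF // (lt_trans ltr01 he1).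
have e'E : e' = eps^-1.
  by rewrite -[e']mul1r -(mulVf e0) -mulrA he' mulr1.
set E := eps ^+ n.
have E0 : E != 0 by rewrite expf_neq0.
have GEE : G d E := hGE.
have GEi : G d E^-1.
  apply: (G2 GEE); last by rewrite divff.
  by rewrite /E -exprVn -e'E; apply: OKX.
have GEq : forall q, G d (E ^ q) by move=> q; apply: GZ.
have Einv : forall q : int, E ^ q * E ^ (- q) = 1.
  by move=> q; rewrite -expfzDr // subrr expr0z.
have key : forall k : int, G d (eps ^ k) -> exists q, eps ^ k = E ^ q.
  move=> k hk; exists (k %/ n)%Z.
  have n0 : (n : int) != 0 by rewrite eqz_nat -lt0n.
  have hr0 : 0 <= (k %% n)%Z by apply: modz_ge0.
  have hr1 : (k %% n)%Z < n by apply: ltz_pmod; rewrite ltz_nat.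
  set r := (k %% n)%Z in hr0 hr1.
  have ek : eps ^ k = E ^ (k %/ n)%Z * eps ^ r.
    by rewrite {1}(divz_eq k n) expfzDr // -exprz_exp exprzAC /E -exprnP.
  have gr : G d (eps ^ r).
    apply: (G5 (GEq (k %/ n)%Z) (GEq (- (k %/ n)%Z)) (Einv _)); by rewrite -ek.
  rewrite -(gez0_abs hr0) -exprnP in gr; rewrite -(gez0_abs hr0) ltz_nat in hr1.
  case: (posnP `|r|%N) => h.
    by rewrite ek -(gez0_abs hr0) h expr0z mulr1.
  by exfalso; apply: (hmin `|r|%N); [rewrite h hr1|].
have Pw : forall (i : bool) (k : int), gC2 ^+ i * uC2 eps n ^ k = P ((-1) ^+ i * E ^ k).
  move=> i k; rewrite gC2E PX.
  have -> : uC2 eps n = P E by [].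
  by rewrite Pz // PM.
have Gw : forall (i : bool) k, G d ((-1) ^+ i * E ^ k).
  move=> i k; case: i => /=; rewrite ?expr1 ?expr0 ?mulN1r ?mul1r; last exact: GEq.
  by apply: G3'; apply: GEq.
have Epos : 0 < E by rewrite (lt_trans ltr01) // exprn_egt1 // -lt0n.
have E1 : 1 < E by rewrite exprn_egt1 // -lt0n.
split.
- move=> x; split.
  + case: x => a b [[ha hb] /= ha1 [[c e] [[hc he] hxy]]].
    rewrite /aug /= in ha1.
    rewrite grmulE in hxy; case: hxy => h1 h2.
    have uv : unitOK d (a - b).
      split; first exact: OKB.
      exists (c - e); split; first exact: OKB.
      transitivity (a * c + b * e - (a * e + b * c)); first by ring.
      by rewrite h1 h2 subr0.
    have [s [k hv]] := hU _ uv.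
    have gv : G d (a - b).
      rewrite /G; have -> : a - b - 1 = a - b - (a + b) by rewrite ha1.
      have -> : (a - b - (a + b)) / 2 = - b by field.
      exact: OKN.
    rewrite hv in gv.
    have gk : G d (eps ^ k).
      case: (s) gv => /= gv; first by rewrite expr1 mulN1r in gv; apply: G3.
      by rewrite expr0 mul1r in gv.
    have [q hq] := key k gk.
    exists s, q; rewrite Pw -hq -hv /P.
    have hb' : b = 1 - a by rewrite -ha1 addrC addKr.
    rewrite hb'; congr pair; by field.
  + move=> [i [k ->]]; rewrite Pw.
    split; first exact: GP.
      by rewrite /aug /P /=; field.
    exists (P ((-1) ^+ i * E ^ (- k))); split; first exact: GP.
    rewrite PM mulrACA Einv mulr1 -P1; congr P.
    by case: i => /=; rewrite ?expr1 ?expr0 ?mulN1r ?mul1r ?opprK.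
- move=> i j k l; rewrite !Pw => /Pinj h.
  have hij : i = j.
    move: h; case: i; case: j => // h; exfalso; rewrite /= ?expr1 ?expr0 ?mulN1r ?mul1r in h.
      move: (exprz_gt0 l Epos); rewrite -h oppr_gt0 => /(lt_trans (exprz_gt0 k Epos)).
      by rewrite ltxx.
    move: (exprz_gt0 k Epos); rewrite h oppr_gt0 => /(lt_trans (exprz_gt0 l Epos)).
    by rewrite ltxx.
  subst j; split => //.
  have h' : E ^ k = E ^ l.
    by move: h; case: i => /=; rewrite ?expr1 ?expr0 ?mulN1r ?mul1r // => /oppr_inj.
  have hm : E ^ (k - l) = 1 by rewrite expfzDr // h' Einv.
  apply: subr0_eq; move: hm; case: (k - l) => m.
    rewrite -exprnP => /eqP; case: m => [//|m]; by rewrite gt_eqF // exprn_egt1.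
  change ((E ^+ m.+1)^-1 = 1 -> Negz m = 0) => /eqP; rewrite invr_eq1.
  by rewrite gt_eqF // exprn_egt1.
Qed.
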